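(* Let $S\subset\mathbb{N}$ be a WM set. Then $S$ is 1-recurrent: for every $E\subset\mathbb{N}$ with positive upper Banach density there exists $s\in S$ with $E\cap(E-s)\neq\emptyset$. In particular $S$ is a Poincaré set: for every probability measure preserving system $(X,\Sigma,\mu,T)$ and every $A\in\Sigma$ with $\mu(A)>0$ there exists $s\in S$ with $\mu(A\cap T^{-s}A)>0$.
   Context: $\mathbb{N}=\{1,2,\dots\}$. Upper Banach density: $d^*(E)=\limsup_{b_n-a_n\to\infty}\frac{|E\cap\{a_n,\dots,b_n\}|}{b_n-a_n+1}$. $\Omega=\{0,1\}^{\mathbb{N}}$ with product topology and left shift $T$; $X_{1_S}$ is the closure of $\{T^n1_S:n\ge0\}$. A point $\xi$ is generic for $(X,\mu,T)$ if $\frac1N\sum_{n=0}^{N-1}f(T^n\xi)\to\int f\,d\mu$ for all continuous $f$. $d(S)=\lim_N\frac1N|S\cap\{1,\dots,N\}|$. $S$ is a WM set if for some $T$-invariant Borel probability $\mu$ on $X_{1_S}$, $1_S$ is generic for $(X_{1_S},\mu,T)$, this system is weakly mixing, and $d(S)>0$. *)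

(* Defs.v *)
From HB Require Import structures.
From mathcomp Require Import all_boot all_order all_algebra.
From mathcomp Require Import all_classical all_reals all_analysis.
Set Implicit Arguments. Unset Strict Implicit. Unset Printing Implicit Defensive.
Import Order.TTheory GRing.Theory Num.Theory.
Import numFieldNormedType.Exports.
Local Open Scope classical_set_scope.
Local Open Scope ring_scope.

(* Omega = {0,1}^N with the product topology is [cantor_space]
   (= prod_topology (fun _ : nat => bool)); coordinate k of a point
   corresponds to the integer k+1 of N = {1,2,...}. *)

Definition Omega : Type := g_sigma_algebraType (@open cantor_space).

Definition shift (x : nat -> bool) : nat -> bool := fun n => x n.+1.

Definition indic (S : set nat) : nat -> bool := fun k => (k.+1 \in S).

Definition orbit_closure (S : set nat) : set cantor_space :=
  closure (range (fun n : nat => (iter n shift (indic S) : cantor_space))).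

Definition has_density (R : realType) (S : set nat) (d : R) : Prop :=
  (fun N : nat => (\sum_(1 <= k < N.+1) (k \in S)%:R) / N%:R) @ \oo --> d.

Definition generic (R : realType) (mu : probability Omega R)
    (xi : nat -> bool) : Prop :=
  forall f : cantor_space -> R, continuous f ->
    (fun N : nat =>
       ((N.+1%:R)^-1 * \sum_(n < N.+1) f (iter n shift xi))%:E) @ \oo -->
    (\int[mu]_x (f x)%:E)%E.

Definition shift_invariant (R : realType) (mu : probability Omega R) : Prop :=
  forall A : set Omega, measurable A -> mu (shift @^-1` A) = mu A.

Definition weakly_mixing (R : realType) (mu : probability Omega R) : Prop :=
  forall A B : set Omega, measurable A -> measurable B ->
    (fun N : nat => (N.+1%:R)^-1 *
       \sum_(n < N.+1) `| fine (mu (A `&` (iter n shift @^-1` B)))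
                         - fine (mu A) * fine (mu B) |) @ \oo --> (0 : R).

Definition WM_set (R : realType) (S : set nat) : Prop :=
  S `<=` [set n | (0 < n)%N] /\
  (exists mu : probability Omega R,
     mu (orbit_closure S) = 1%E /\          (* mu is a measure on X_{1_S} *)
     shift_invariant mu /\
     generic mu (indic S) /\
     weakly_mixing mu) /\
  (exists d : R, 0 < d /\ has_density S d).

Definition interval_ratio (R : realType) (E : set nat) (a b : nat) : R :=
  (\sum_(a <= k < b.+1) (k \in E)%:R) / (b - a + 1)%:R.

(* upper Banach density:
   d*(E) = limsup_{b_n - a_n -> oo} |E cap {a_n..b_n}| / (b_n - a_n + 1),
   i.e. the supremum, over all sequences of intervals {a_n..b_n} of N with
   b_n - a_n -> oo, of the limsup of the ratios. *)
Definition upper_banach_density (R : realType) (E : set nat) : \bar R :=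
  ereal_sup [set l | exists a b : nat -> nat,
     (forall n, (1 <= a n)%N) /\
     (forall M : nat, \forall n \near \oo, (M <= b n - a n)%N) /\
     l = limn_esup (fun n => (interval_ratio R E (a n) (b n))%:E)].

(* Main.v *)
Require Import Defs.
From mathcomp Require Import ring lra zify.
From HB Require Import structures.
From mathcomp Require Import all_boot all_order all_algebra.
From mathcomp Require Import all_classical all_reals all_analysis.
Import Order.TTheory GRing.Theory Num.Theory.
Import numFieldNormedType.Exports.
Local Open Scope classical_set_scope.
Local Open Scope ring_scope.
Local Notation shift := Defs.shift.
Local Notation indicS := Defs.indic.
Definition Bset (L : seq nat) : set cantor_space := fun x : cantor_space => all (fun m => (x : nat -> bool) m) L.

Lemma Bset_clopen L : clopen (Bset L).
Proof.
elim: L => [|m L IH].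
  have -> : Bset [::] = setT by apply/seteqP; split => x.
  exact: clopenT.
rewrite (_ : Bset (m :: L) = (@proj nat (fun _ => bool) m @^-1` [set true]) `&` Bset L).
  apply: clopenI => //; apply: preimage_clopen; last exact: proj_continuous.
  by split; [exact: discrete_open|exact: discrete_closed].
by apply/seteqP; split => x /=; rewrite /Bset /proj /= => /andP.
Qed.

Lemma indic_continuous (R : realType) (B : set cantor_space) : clopen B ->
  continuous (\1_B : cantor_space -> R).
Proof.
move=> [oB cB] x; case: (pselect (B x)) => Bx.
  apply: (@near_cst_continuous _ _ (1:R)).
  have : nbhs x B by apply: open_nbhs_nbhs; split.
  by apply: filterS => y By; rewrite indicE mem_set.
apply: (@near_cst_continuous _ _ (0:R)).
have : nbhs x (~` B) by apply: open_nbhs_nbhs; split => //; exact: closed_openC.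
by apply: filterS => y By; rewrite indicE memNset.
Qed.

Lemma clopen_meas (B : set cantor_space) : clopen B -> measurable (B : set Omega).
Proof. by case=> oB _; exact: sub_sigma_algebra. Qed.

Lemma gen_B (R : realType) (mu : probability Omega R) xi (B : set cantor_space) :
  generic mu xi -> clopen B ->
  (fun N : nat => (N.+1%:R)^-1 * \sum_(n < N.+1) (\1_B (iter n shift xi) : R)) @ \oo --> fine (mu B).
Proof.
move=> g cB; have := g _ (@indic_continuous R B cB).
rewrite integral_indic; last exact: clopen_meas.
rewrite setIT => h.
have fB : mu B \is a fin_num by apply: fin_num_measure; exact: clopen_meas.
apply: (@fine_cvg _ _ _ _ (fun N : nat => ((N.+1%:R)^-1 * \sum_(n < N.+1) (\1_B (iter n shift xi) : R))%:E)).
  by rewrite fineK.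
exact: measurableT.
Qed.

Lemma iter_shift n (x : nat -> bool) m : iter n shift x m = x (m + n)%N.
Proof.
elim: n m => [|n IH] m /=; first by rewrite addn0.
by rewrite /Defs.shift IH addSnnS.
Qed.

Definition C0 : set cantor_space := Bset [:: 0%N].

Lemma muC (R : realType) (mu : probability Omega R) (S : set nat) (d : R) :
  generic mu (indicS S) -> has_density S d -> fine (mu C0) = d.
Proof.
move=> g hd.
have h1 := @gen_B _ _ _ _ g (Bset_clopen [:: 0%N]).
have h2 : (fun N : nat => (N.+1%:R)^-1 * \sum_(n < N.+1) (\1_C0 (iter n shift (indicS S)) : R)) @ \oo --> d.
  rewrite /has_density -cvg_shiftS in hd.
  apply: cvg_trans hd; apply: near_eq_cvg; near=> N => /=.
  rewrite mulrC big_add1 /= big_mkord; congr (_ * _).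
  apply: eq_bigr => i _; rewrite indicE /C0 /Bset /= mem_setE unfold_in /= iter_shift /Defs.indic add0n andbT.
  by [].
exact: (cvg_unique _ h1 h2).
Unshelve. all: by end_near.
Qed.

Lemma Bset_cons t L :
  Bset (0%N :: map (addn t) L) = C0 `&` (iter t shift @^-1` Bset L).
Proof.
have e x : all x [seq (t + i)%N | i <- L] = all (iter t shift x) L.
  by rewrite all_map; apply: eq_all => m /=; rewrite iter_shift addnC.
apply/seteqP; split => x; rewrite /Bset /C0 /= e.
  by move/andP => [h1 h2]; split => //; rewrite /Bset /= h1.
by move=> [h1 ->]; move: h1; rewrite /Bset /= andbT => ->.
Qed.

Lemma step (R : realType) (mu : probability Omega R) (S : set nat) L :
  generic mu (indicS S) -> weakly_mixing mu -> (0 < mu C0)%E -> (0 < mu (Bset L))%E ->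
  exists t, all (iter t shift (indicS S)) L /\
            (0 < mu (Bset (0%N :: map (addn t.+1) L)))%E.
Proof.
move=> g wm hC hB.
set xi := indicS S.
have mC := @clopen_meas _ (Bset_clopen [:: 0%N]).
have mB := @clopen_meas _ (Bset_clopen L).
set c := fine (mu C0); set b := fine (mu (Bset L)).
have cpos : 0 < c by apply: fine_gt0; rewrite hC ltey_eq fin_num_measure.
have bpos : 0 < b by apply: fine_gt0; rewrite hB ltey_eq fin_num_measure.
case: (pselect (exists t, all (iter t shift xi) L /\
            (0 < mu (Bset (0%N :: map (addn t.+1) L)))%E)) => // H; exfalso.
pose v n := `|fine (mu (C0 `&` (iter n shift @^-1` Bset L))) - c * b|.
have key t : (\1_(Bset L) (iter t shift xi) : R) * (c * b) <= v t.+1.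
  rewrite indicE /v; case: (boolP (iter t shift xi \in Bset L)) => h; last first.
    by rewrite mul0r.
  have h' : all (iter t shift xi) L by move: h; rewrite mem_setE.
  have -> : mu (C0 `&` (iter t.+1 shift @^-1` Bset L)) = 0%E.
    rewrite -Bset_cons; apply/eqP; rewrite eq_le measure_ge0 andbT leNgt.
    by apply/negP => hp; apply: H; exists t.
  by rewrite mul1r /= sub0r normrN ger0_norm // mulr_ge0 // ltW.
pose G N := (N.+1%:R)^-1 * \sum_(n < N.+1) (\1_(Bset L) (iter n shift xi) : R).
pose w N := (N.+1%:R)^-1 * \sum_(n < N.+1) v n.
have ineq N : c * b * (G N - harmonic N) <= w N.
  rewrite /G /w /harmonic /=.
  set k := N.+1%:R^-1.
  have kpos : 0 <= k by rewrite /k invr_ge0.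
  suff h : c * b * (\sum_(n < N.+1) (\1_(Bset L) (iter n shift xi) : R) - 1)
           <= \sum_(n < N.+1) v n.
    have -> : c * b * (k * \sum_(n < N.+1) (\1_(Bset L) (iter n shift xi) : R) - k)
        = k * (c * b * (\sum_(n < N.+1) (\1_(Bset L) (iter n shift xi) : R) - 1)).
      by ring.
    exact: ler_wpM2l.
  have cb0 : 0 <= c * b by rewrite mulr_ge0 // ltW.
  rewrite big_ord_recr /= big_ord_recl /=.
  apply: (@le_trans _ _ (\sum_(i < N) (\1_(Bset L) (iter i shift xi) : R) * (c * b))).
    rewrite -mulr_suml [X in _ <= X]mulrC; apply: ler_wpM2l => //.
    rewrite lerBlDr lerD2l.
    by rewrite indicE; case: (_ \in _).
  apply: (@le_trans _ _ (\sum_(i < N) v i.+1)).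
    by apply: ler_sum => i _; exact: key.
  by rewrite lerDr /v normr_ge0.
have hG : G @ \oo --> b := @gen_B _ _ _ _ g (Bset_clopen L).
have hw : w @ \oo --> 0 := wm _ _ mC mB.
have hl : (fun N => c * b * (G N - harmonic N)) @ \oo --> c * b * (b - 0).
  apply: cvgM; first exact: cvg_cst.
  apply: cvgB => //; exact: cvg_harmonic.
have hh : c * b * (b - 0) <= 0.
  by apply: (ler_cvg_to hl hw); exact: nearW.
have : 0 < c * b * b by rewrite !mulr_gt0.
by rewrite subr0 in hh; rewrite ltNge hh.
Qed.

Fixpoint clique (S : set nat) (s : seq nat) : Prop :=
  if s is x :: s' then (forall y, y \in s' -> S (x - y)%N) /\ clique S s' else True.

Definition Dl (s : seq nat) := [seq (head 0%N s - a)%N | a <- s].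

Lemma cliques (R : realType) (mu : probability Omega R) (S : set nat) :
  generic mu (indicS S) -> weakly_mixing mu -> (0 < mu C0)%E ->
  forall k, exists s, size s = k.+1 /\ clique S s /\
     all (fun a => a <= head 0%N s)%N s /\ (0 < mu (Bset (Dl s)))%E.
Proof.
move=> g wm hC; elim => [|k [s [sz [cl [hd hm]]]]].
  by exists [:: 0%N]; split => //; split => //.
case: s sz cl hd hm => // h s' sz cl hd hm.
have [t [ht hpos]] := @step _ _ _ _ g wm hC hm.
exists ((h + t.+1)%N :: h :: s'); split; first by rewrite /= -sz.
have hle : forall a, a \in h :: s' -> (a <= h)%N by move=> a /(allP hd).
split; [split => // y ys|split].
- have := allP ht (h - y)%N (map_f _ ys) => /=.
  rewrite iter_shift /indicS /Defs.indic => /set_mem.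
  by have := hle _ ys; have -> : (h + t.+1 - y = (h - y + t).+1)%N by have := hle _ ys; lia.
- rewrite /= leqnn /=; apply/andP; split; first by rewrite leq_addr.
  apply/allP => a ha; apply: leq_trans (hle a _) (leq_addr _ _).
  by rewrite inE ha orbT.
- rewrite (_ : Dl _ = 0%N :: map (addn t.+1) (Dl (h :: s'))) //.
  rewrite /Dl /= -map_comp; apply: congr2; first lia.
  apply: congr2; first lia.
  apply/eq_in_map => a ha /=.
  by have := hle a; rewrite inE ha orbT => /(_ isT); lia.
Qed.

Section Poinc.
Variables (R : realType) (d : measure_display) (X : measurableType d)
  (mu : probability X R) (T : X -> X).
Hypothesis mT : measurable_fun setT T.
Hypothesis invT : forall A : set X, measurable A -> mu (T @^-1` A) = mu A.

Lemma iter_pre n (A : set X) : measurable A ->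
  measurable (iter n T @^-1` A) /\ mu (iter n T @^-1` A) = mu A.
Proof.
elim: n A => [|n IH] A mA; first by [].
have mTA : measurable (T @^-1` A) by rewrite -[_ @^-1` _]setTI; exact: mT.
have -> : iter n.+1 T @^-1` A = iter n T @^-1` (T @^-1` A) by [].
have [h1 h2] := IH _ mTA; split => //; by rewrite h2 invT.
Qed.

Lemma fin_mu (B : set X) : measurable B -> (mu B < +oo)%E.
Proof. by move=> mB; rewrite ltey_eq fin_num_measure. Qed.

Definition Un (A : set X) (s : seq nat) : set X :=
  foldr (fun x U => (iter x T @^-1` A) `|` U) set0 s.

Lemma Un_meas A s : measurable A -> measurable (Un A s).
Proof.
move=> mA; elim: s => [|x s IH] /=; first exact: measurable0.
apply: measurableU; [exact: (iter_pre x _ mA).1 | exact: IH].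
Qed.

Lemma null_inter (A B : set X) s : measurable A -> measurable B ->
  (forall y, y \in s -> mu (B `&` iter y T @^-1` A) = 0%E) ->
  mu (B `&` Un A s) = 0%E.
Proof.
move=> mA mB; elim: s => [|y s IH] h /=; first by rewrite setI0 measure0.
rewrite setIUr; apply/eqP; rewrite -measure_le0.
apply: le_trans (measureU2 _ _ _) _.
- by apply: measurableI => //; exact: (iter_pre y _ mA).1.
- by apply: measurableI => //; exact: Un_meas.
have h1 : (mu (B `&` iter y T @^-1` A) <= 0)%E by rewrite h // mem_head.
have h2 : (mu (B `&` Un A s) <= 0)%E.
  rewrite IH // => z zs; apply: h; by rewrite in_cons zs orbT.
by rewrite -(adde0 0%E); apply: leeD.
Qed.

Lemma pair_null (S : set nat) (A : set X) x y : S `<=` [set n | (0 < n)%N] ->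
  measurable A -> S (x - y)%N ->
  (forall n, S n -> mu (A `&` iter n T @^-1` A) = 0%E) ->
  mu (iter x T @^-1` A `&` iter y T @^-1` A) = 0%E.
Proof.
move=> Spos mA Sxy H.
have xy : (y <= x)%N by have := Spos _ Sxy; rewrite /= subn_gt0 => /ltnW.
have e : iter x T @^-1` A `&` iter y T @^-1` A =
    iter y T @^-1` (iter (x - y) T @^-1` A `&` A).
  apply/seteqP; split => z /=; by rewrite -iterD subnK.
have mI : measurable (iter (x - y) T @^-1` A `&` A).
  by apply: measurableI => //; exact: (iter_pre (x - y) _ mA).1.
by rewrite e (iter_pre y _ mI).2 setIC H.
Qed.

Lemma Un_mu (S : set nat) (A : set X) s : S `<=` [set n | (0 < n)%N] ->
  measurable A -> clique S s ->
  (forall n, S n -> mu (A `&` iter n T @^-1` A) = 0%E) ->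
  mu (Un A s) = ((size s)%:R * fine (mu A))%:E.
Proof.
move=> Spos mA; elim: s => [|x s IH] /= cl H; first by rewrite measure0 mul0r.
case: cl => hx cl.
have mP := (iter_pre x _ mA).1.
have hn : mu (iter x T @^-1` A `&` Un A s) = 0%E.
  apply: null_inter => // y ys; exact: pair_null Spos mA (hx _ ys) H.
have hp : mu (iter x T @^-1` A) = mu A := (iter_pre x _ mA).2.
have hu := IH cl H.
rewrite measureUfinl //; last 2 first.
- exact: Un_meas.
- exact: fin_mu.
transitivity (mu A + ((size s)%:R * fine (mu A))%:E - 0)%E.
  by congr (_ + _ - _)%E.
rewrite sube0 -[mu A](@fineK _ _) ?fin_num_measure //.
by rewrite -EFinD /=; congr EFin; rewrite -addn1 natrD; ring.
Qed.

End Poinc.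

Lemma poincare (R : realType) (S : set nat) : S `<=` [set n | (0 < n)%N] ->
  (forall k, exists s, size s = k.+1 /\ clique S s) ->
  forall (d : measure_display) (X : measurableType d)
          (mu : probability X R) (T : X -> X),
     measurable_fun setT T ->
     (forall A : set X, measurable A -> mu (T @^-1` A) = mu A) ->
     forall A : set X, measurable A -> (0 < mu A)%E ->
     exists s, S s /\ (0 < mu (A `&` (iter s T @^-1` A)))%E.
Proof.
move=> Spos cl d X mu T mT invT A mA hA.
set a := fine (mu A).
have apos : 0 < a by apply: fine_gt0; rewrite hA ltey_eq fin_num_measure.
have [s [sz cs]] := cl (Num.bound (a^-1)).
case: (pselect (exists s, S s /\ (0 < mu (A `&` (iter s T @^-1` A)))%E)) => // H.
exfalso.
have H0 : forall n, S n -> mu (A `&` iter n T @^-1` A) = 0%E.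
  move=> n Sn; apply/eqP; rewrite -measure_le0 leNgt; apply/negP => hp.
  by apply: H; exists n.
have hU := @Un_mu _ _ _ _ _ mT invT _ _ _ Spos mA cs H0.
have hle : (mu (Un _ _ T A s) <= 1)%E by apply: probability_le1; exact: (@Un_meas _ _ _ mu _ mT invT).
have ai : 0 <= a^-1 by rewrite invr_ge0 ltW.
have hb := archi_boundP ai.
move: hle; rewrite hU sz lee_fin leNgt => /negP; apply.
have hb2 : 1 < (Num.bound a^-1)%:R * a.
  by rewrite -ltr_pdivrMr // div1r.
apply: lt_trans hb2 _; rewrite ltr_pM2r // ltr_nat //.
Qed.

Section Count.
Variables (S E : set nat) (a b mx : nat).
Hypothesis Spos : S `<=` [set n | (0 < n)%N].
Hypothesis ab : (a <= b)%N.

Definition fz x z : bool := (a + x <= z <= b + x)%N && (z - x \in E)%N.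

Lemma cnt_shift x : (x <= mx)%N ->
  (\sum_(a <= z < b + mx + 1) fz x z = \sum_(a <= k < b.+1) (k \in E))%N.
Proof.
move=> xm.
rewrite (@big_cat_nat _ _ _ (a + x)) //=; last lia.
rewrite (@big_cat_nat _ _ _ (b + x + 1) (a + x)) //=; last 2 first.
- lia.
- lia.
rewrite big1_seq ?add0n; last first.
  by move=> z; rewrite mem_index_iota /fz => /andP [h1 h2]; case: (boolP (a + x <= z <= b + x)%N) => //= /andP []; lia.
rewrite [X in (_ + X)%N]big1_seq ?addn0; last first.
  by move=> z; rewrite mem_index_iota /fz => /andP [h1 h2]; case: (boolP (a + x <= z <= b + x)%N) => //= /andP []; lia.
rewrite big_addn (_ : (b + x + 1 - x = b.+1)%N); last lia.
apply: eq_big_nat => k /andP [k1 k2].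
by rewrite /fz addnK (_ : (a + x <= k + x <= b + x)%N) //; apply/andP; split; lia.
by rewrite leq_addr.
Qed.

Lemma union_count s : clique S s ->
  (forall x y, E x -> E (x + y)%N -> ~ S y) ->
  (\sum_(a <= z < b + mx + 1) has (fun x => fz x z) s =
   \sum_(x <- s) \sum_(a <= z < b + mx + 1) fz x z)%N.
Proof.
move=> + H; elim: s => [|x s IH] /=.
  by move=> _; rewrite big_nil big1.
move=> [hx cl]; rewrite big_cons -IH // -big_split /=.
apply: eq_bigr => z _.
case: (boolP (fz x z)) => fx; last by rewrite orFb add0n.
case: (boolP (has (fun x0 => fz x0 z) s)) => // /hasP [y ys fy].
exfalso; have Sxy := hx _ ys.
have := Spos _ Sxy; rewrite /= subn_gt0 => yx.
move: fx fy; rewrite /fz => /andP [/andP [h1 h2] /set_mem e1] /andP [_ /set_mem e2].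
apply: (H (z - x)%N (x - y)%N e1 _ Sxy).
by rewrite (_ : (z - x + (x - y) = z - y)%N) //; lia.
Qed.

Lemma count_bound s : clique S s ->
  (forall x y, E x -> E (x + y)%N -> ~ S y) -> all (fun x => x <= mx)%N s ->
  (size s * \sum_(a <= k < b.+1) (k \in E) <= b + mx + 1 - a)%N.
Proof.
move=> cl H hm.
have -> : (size s * \sum_(a <= k < b.+1) (k \in E) =
   \sum_(x <- s) \sum_(a <= z < b + mx + 1) fz x z)%N.
  elim: s hm {cl} => [|x s IH] /=; first by rewrite big_nil.
  move=> /andP [xm hm]; rewrite big_cons -IH // cnt_shift //.
rewrite -union_count //.
apply: leq_trans (_ : \sum_(a <= z < b + mx + 1) 1 <= _)%N.
  by apply: leq_sum => z _; case: has.
by rewrite sum_nat_const_nat muln1.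
Qed.

End Count.

Lemma esup_freq (R : realType) (u : nat -> R) (δ : R) :
  (δ%:E < limn_esup (fun n => (u n)%:E))%E -> forall N, exists n, (N <= n)%N /\ δ < u n.
Proof.
move=> h N.
have : (δ%:E < ereal_sup ((fun n => (u n)%:E) @` [set n | (N <= n)%N]))%E.
  apply: lt_le_trans h _; rewrite /limn_esup /limf_esup.
  apply: ereal_inf_lbound; exists [set n | (N <= n)%N] => //; by exists N.
move/ereal_sup_gt => [_ [n /= Nn <-]]; rewrite lte_fin => hn.
by exists n.
Qed.

Lemma le_sumn s x : x \in s -> (x <= sumn s)%N.
Proof.
elim: s => [|y s IH] //=; rewrite in_cons => /orP [/eqP ->|/IH h].
  exact: leq_addr.
exact: leq_trans h (leq_addl _ _).
Qed.

Lemma arith_contra (R : realType) (k c l m δ : R) :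
  (k + 1) * c <= l + m -> m + 2 <= l -> 0 <= k * (c - δ * l) ->
  0 < (k * δ - 2) * l -> 0 <= c -> False.
Proof. move=> *; nra. Qed.

Lemma recur (R : realType) (S : set nat) : S `<=` [set n | (0 < n)%N] ->
  (forall k, exists s, size s = k.+1 /\ clique S s) ->
  forall E : set nat, E `<=` [set n | (0 < n)%N] ->
     (0 < upper_banach_density R E)%E ->
     exists s, S s /\ exists x, E x /\ E (x + s)%N.
Proof.
move=> Spos cl E Epos hE.
have [l [aa [bb [ha [hlen ->]]]] hl] := ereal_sup_gt hE.
pose u := fun n => interval_ratio R E (aa n) (bb n).
have hl' : (0 < limn_esup (fun n => (u n)%:E))%E := hl.
have [δ [δ0 hδ]] : exists δ : R, 0 < δ /\ (δ%:E < limn_esup (fun n => (u n)%:E))%E.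
  move: hl'; case: (limn_esup (fun n => (u n)%:E)) => [r| |] hr //.
    rewrite lte_fin in hr; exists (r / 2); split; first by lra.
    by rewrite lte_fin; lra.
  by exists 1; split => //; exact: ltry.
set K := Num.bound (2 / δ).
have [s [sz cs]] := cl K.
set mx := sumn s.
case: (pselect (exists s, S s /\ exists x, E x /\ E (x + s)%N)) => // H; exfalso.
have H' : forall x y, E x -> E (x + y)%N -> ~ S y.
  by move=> x y ex exy Sy; apply: H; exists y; split => //; exists x.
have [N0 _ hN0] := hlen mx.+1.
have [n [Nn hn]] := @esup_freq _ _ _ hδ N0.
have hlen' : (mx.+1 <= bb n - aa n)%N := hN0 _ Nn.
set A := aa n in hlen' hn *; set B := bb n in hlen' hn *.
have AB : (A <= B)%N by lia.
have hm : all (fun x => x <= mx)%N s by apply/allP => x; exact: le_sumn.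
have hcb := @count_bound S E A B mx Spos AB s cs H' hm.
set cnt := (\sum_(A <= k < B.+1) (k \in E))%N in hcb.
have hr : u n = cnt%:R / (B - A + 1)%:R by rewrite /u /interval_ratio natr_sum.
have hK : 2 / δ < K%:R by apply: archi_boundP; rewrite divr_ge0 // ltW.
have eL : (B + mx + 1 - A = (B - A + 1) + mx)%N by lia.
rewrite eL in hcb.
have h4 : (mx + 2 <= B - A + 1)%N by lia.
move: hn hcb h4 hK; rewrite hr.
set L := (B - A + 1)%N.
have Lp : (0 < L)%N by rewrite /L addn1.
move=> hn hcb h4 hK.
have h1 : δ * L%:R < cnt%:R by rewrite -ltr_pdivlMr // ltr0n.
have h2 : 2 < K%:R * δ by rewrite -ltr_pdivrMr.
have h3 : (K%:R + 1) * cnt%:R <= L%:R + mx%:R :> R.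
  by rewrite natr1 -natrM -natrD ler_nat -sz.
have h5 : mx%:R + 2 <= L%:R :> R by rewrite -natrD ler_nat.
have p1 : 0 <= K%:R * (cnt%:R - δ * L%:R) :> R by rewrite mulr_ge0 // subr_ge0 ltW.
have p2 : 0 < (K%:R * δ - 2) * L%:R :> R by rewrite mulr_gt0 ?subr_gt0 // ltr0n.
have c0 : 0 <= cnt%:R :> R by [].
exact: (@arith_contra _ _ _ _ _ _ h3 h5 p1 p2 c0).
Qed.

Theorem mainTheorem6 (R : realType) (S : set nat) :
  WM_set R S ->
  (* S is 1-recurrent *)
  (forall E : set nat, E `<=` [set n | (0 < n)%N] ->
     (0 < upper_banach_density R E)%E ->
     exists s, S s /\ exists x, E x /\ E (x + s)%N) /\
  (* S is a Poincare set *)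
  (forall (d : measure_display) (X : measurableType d)
          (mu : probability X R) (T : X -> X),
     measurable_fun setT T ->
     (forall A : set X, measurable A -> mu (T @^-1` A) = mu A) ->
     forall A : set X, measurable A -> (0 < mu A)%E ->
     exists s, S s /\ (0 < mu (A `&` (iter s T @^-1` A)))%E).
Proof.
move=> [Spos [[mu [_ [_ [g wm]]]] [d [d0 hd]]]].
have hC : (0 < mu C0)%E.
  have mC := @clopen_meas _ (Bset_clopen [:: 0%N]).
  rewrite -(fineK (fin_num_measure _ _ mC)) lte_fin.
  by rewrite (@muC _ _ _ _ g hd).
have cl : forall k, exists s, size s = k.+1 /\ clique S s.
  move=> k; have [s [h1 [h2 _]]] := @cliques _ _ _ g wm hC k.
  by exists s.
split; [exact: recur | exact: poincare].
Qed.
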